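(* Let $\gamma$ and $\alpha$ be weak compositions of $m$ with $n$ parts and let $\sigma\in S_n$. Denote by $c_\gamma$ the coefficient of the monomial $x_{\sigma_1}^{\gamma_1}x_{\sigma_2}^{\gamma_2}\cdots x_{\sigma_n}^{\gamma_n}$ in $\mathrm{E}^\sigma_\alpha(\mathbf{x};q,t)$. Then $c_\gamma=0$ if $\mathrm{sort}(\gamma)>_{\mathrm{lex}}\mathrm{sort}(\alpha)$; $c_\gamma=0$ if $\mathrm{sort}(\gamma)=\mathrm{sort}(\alpha)$ and $\gamma>_{\mathrm{lex}}\alpha$; and $c_\gamma=1$ if $\gamma=\alpha$.
   Context: Fix $n\ge1$. A composition is $\alpha=(\alpha_1,\dots,\alpha_n)\in\mathbb{Z}_{\ge0}^n$; $\mathrm{sort}(\alpha)$ is the partition obtained by sorting the parts of $\alpha$ in weakly decreasing order, and $>_{\mathrm{lex}}$ is the lexicographic order comparing entries from left to right. Permutations $\sigma\in S_n$ are written in one-line notation $(\sigma_1,\dots,\sigma_n)$. Permuted-basement Macdonald polynomials: the augmented diagram of shape $\alpha$ has rows $r=1,\dots,n$ numbered top to bottom and columns numbered left to right starting from $0$; row $r$ consists of the basement box $(r,0)$ and the boxes $(r,c)$, $1\le c\le\alpha_r$. An augmented filling with basement $\sigma$ is a map $F$ from all boxes to $\{1,\dots,n\}$ with $F(r,0)=\sigma_r$. It is non-attacking if no two distinct boxes have equal entries while lying either in the same column, or in columns $c-1$ and $c$ with the box in column $c$ in a strictly lower row (larger row index) than the box in column $c-1$. Let $\mathrm{NAF}_\sigma(\alpha)$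 be the set of non-attacking such fillings. For a non-basement box $u=(r,c)$ put $d(u)=(r,c-1)$, $\mathrm{leg}(u)=\alpha_r-c$, and $\mathrm{arm}(u)=|\{r'>r: c\le\alpha_{r'}\le\alpha_r\}|+|\{r'<r: c-1\le\alpha_{r'}<\alpha_r\}|$. A non-basement box $u$ is a descent if $F(d(u))<F(u)$; $\mathrm{maj}(F)=\sum_{u\text{ descent}}(\mathrm{leg}(u)+1)$. A type A triple is a triple of boxes $a=(r,c-1)$, $b=(r,c)$, $e=(r',c)$ with $c\ge1$, $r'>r$, $c\le\alpha_{r'}\le\alpha_r$; a type B triple is $a=(r,c-1)$, $b=(r,c)$, $e=(r',c-1)$ with $c\ge1$, $r'<r$, $c-1\le\alpha_{r'}<\alpha_r$. Order the three boxes by their entries, breaking ties so that $a>e>b$; the triple is an inversion triple if $b<a<e$, $a<e<b$ or $e<b<a$ (for type A this means the boxes listed in increasing order go around counter-clockwise, for type B clockwise). $\mathrm{coinv}(F)$ is the number of type A and type B triples that are not inversion triples. Let $\mathbf{x}^F=\prod_{u\text{ non-basement}}x_{F(u)}$. Then $$\mathrm{E}^\sigma_\alpha(\mathbf{x};q,t)=\sum_{F\in\mathrm{NAF}_\sigma(\alpha)}\mathbf{x}^Fq^{\mathrm{maj}F}t^{\mathrm{coinv}F}\prod_{\substack{u\text{ non-basement}\\ F(u)\ne F(d(u))}}\frac{1-t}{1-q^{1+\mathrm{leg}(u)}t^{1+\mathrm{arm}(u)}}\in\mathbb{Q}(q,t)[x_1,\dots,x_n].$$ *)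

(* Defs.v *)
From HB Require Import structures.
From mathcomp Require Import all_boot all_order all_algebra all_fingroup.
From mathcomp Require Import fraction.
Set Implicit Arguments. Unset Strict Implicit. Unset Printing Implicit Defensive.
Import Order.TTheory GRing.Theory Num.Theory.

(* Conventions: rows 1..n of the paper are 'I_n (0..n-1), entries 1..n are
   'I_n (0..n-1, shifted by one; this preserves all comparisons).
   Columns are natural numbers 0..N with N = max part of alpha; column 0 is
   the basement.  A filling is a finite function on the grid 'I_n * 'I_N.+1;
   cells outside the augmented diagram (c > alpha_r) are normalised to sigma_r
   so that fillings of the augmented diagram correspond bijectively to
   normalised grid functions. *)

(* Q(q,t) := fraction field of Q[t][q]... concretely {poly {poly rat}},
   q = inner variable, t = outer variable. *)
Definition Kqt := {fraction {poly {poly rat}}}.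
Definition qv : Kqt := tofrac (('X : {poly rat})%:P).
Definition tv : Kqt := tofrac ('X : {poly {poly rat}}).

Fixpoint lex_gt (s1 s2 : seq nat) : bool :=
  match s1, s2 with
  | x :: s, y :: t => (y < x) || ((x == y) && lex_gt s t)
  | _, _ => false
  end.

Definition sortc (s : seq nat) : seq nat := sort geq s.

Section PB.
Variables (n : nat) (alpha : n.-tuple nat) (sigma : {perm 'I_n}).

Definition al (r : 'I_n) : nat := tnth alpha r.
Definition Ncol : nat := \max_(r < n) al r.

Definition filling := {ffun 'I_n * 'I_Ncol.+1 -> 'I_n}.

Definition ent (F : filling) (r : 'I_n) (c : nat) : nat := F (r, inord c).

Definition nbbox (r : 'I_n) (c : nat) : bool := (1 <= c) && (c <= al r).

Definition basement_ok (F : filling) : bool :=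
  [forall r : 'I_n, F (r, ord0) == sigma r].

Definition normalised (F : filling) : bool :=
  [forall r : 'I_n, forall c : 'I_Ncol.+1, (al r < c) ==> (F (r, c) == sigma r)].

Definition non_attacking (F : filling) : bool :=
  [forall r1 : 'I_n, forall r2 : 'I_n, forall c : 'I_Ncol.+1,
     [&& r1 != r2, c <= al r1 & c <= al r2] ==> (F (r1, c) != F (r2, c))]
  &&
  [forall r1 : 'I_n, forall r2 : 'I_n, forall c : 'I_Ncol.+1,
     [&& 1 <= c, c.-1 <= al r1, c <= al r2 & r1 < r2] ==>
        (ent F r1 c.-1 != F (r2, c))].

Definition NAF (F : filling) : bool :=
  [&& basement_ok F, normalised F & non_attacking F].

Definition leg (r : 'I_n) (c : nat) : nat := al r - c.
Definition arm (r : 'I_n) (c : nat) : nat :=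
  #|[set r' : 'I_n | (r < r') && (c <= al r' <= al r)]|
  + #|[set r' : 'I_n | (r' < r) && (c.-1 <= al r') && (al r' < al r)]|.

Definition is_descent (F : filling) (r : 'I_n) (c : nat) : bool :=
  ent F r c.-1 < ent F r c.

Definition maj (F : filling) : nat :=
  \sum_(r < n) \sum_(1 <= c < (al r).+1)
     (if is_descent F r c then (leg r c).+1 else 0).

(* inversion triple: order boxes by entries, ties broken so that a > e > b;
   encoded by keys 3*v+2 (a), 3*v+1 (e), 3*v (b). *)
Definition inv_triple (va vb ve : nat) : bool :=
  let ka := 3 * va + 2 in let ke := 3 * ve + 1 in let kb := 3 * vb in
  [|| (kb < ka) && (ka < ke), (ka < ke) && (ke < kb) | (ke < kb) && (kb < ka)].

Definition typeA (r r' : 'I_n) (c : nat) : bool :=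
  [&& 1 <= c, r < r' & c <= al r' <= al r].
Definition typeB (r r' : 'I_n) (c : nat) : bool :=
  [&& 1 <= c, r' < r, c.-1 <= al r' & al r' < al r].

Definition coinv (F : filling) : nat :=
  \sum_(r < n) \sum_(r' < n) \sum_(c < Ncol.+1)
    ((typeA r r' c && ~~ inv_triple (ent F r c.-1) (ent F r c) (ent F r' c))
     + (typeB r r' c && ~~ inv_triple (ent F r c.-1) (ent F r c) (ent F r' c.-1))).

Local Open Scope ring_scope.

Definition weight (F : filling) : Kqt :=
  qv ^+ maj F * tv ^+ coinv F *
  \prod_(r < n) \prod_(1 <= c < (al r).+1 | ent F r c != ent F r c.-1)
     ((1 - tv) / (1 - qv ^+ (leg r c).+1 * tv ^+ (arm r c).+1)).

(* content condition: x^F = x_{sigma_1}^{gamma_1} ... x_{sigma_n}^{gamma_n},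
   i.e. exactly gamma_r non-basement boxes carry the entry sigma_r *)
Definition has_content (gamma : n.-tuple nat) (F : filling) : bool :=
  [forall r : 'I_n,
     #|[set u : 'I_n * 'I_Ncol.+1 | nbbox u.1 u.2 && (F u == sigma r)]|
       == tnth gamma r].

(* coefficient of x_{sigma_1}^{gamma_1}...x_{sigma_n}^{gamma_n} in E^sigma_alpha:
   E^sigma_alpha = sum_F x^F * weight F, so this coefficient is the sum of the
   weights of the non-attacking fillings with that monomial. *)
Definition coefEsig (gamma : n.-tuple nat) : Kqt :=
  \sum_(F : filling | NAF F && has_content gamma F) weight F.

End PB.

(* Main.v *)
Require Import Defs.
From HB Require Import structures.
From mathcomp Require Import all_boot all_order all_algebra all_fingroup.
From mathcomp Require Import fraction zify.
Set Implicit Arguments. Unset Strict Implicit. Unset Printing Implicit Defensive.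
Import GRing.Theory.

Lemma cntI (a t M : nat) :
  \sum_(c < M) ((t < c) && (c <= a) : nat) = minn a.+1 M - minn t.+1 M.
Proof.
elim: M => [|M IH]; first by rewrite big_ord0; lia.
rewrite big_ord_recr /= IH.
have [h1|h1] := ltnP t M; have [h2|h2] := leqP M a; rewrite /=; lia.
Qed.

Section S.
Variables (n : nat) (alpha : n.-tuple nat) (sigma : {perm 'I_n}).
Local Notation N := (Ncol alpha).
Local Notation fil := (filling alpha).

Lemma al_le_N r : al alpha r <= N.
Proof. by rewrite /Ncol (bigmax_sup r). Qed.

Definition cnt (F : fil) (v : 'I_n) :=
  #|[set u : 'I_n * 'I_N.+1 | nbbox alpha u.1 u.2 && (F u == v)]|.
Definition colS (F : fil) (U : {set 'I_n}) (c : 'I_N.+1) :=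
  [set r : 'I_n | nbbox alpha r c && (F (r, c) \in U)].

Lemma card_sumb (T : finType) (P : pred T) : #|[set x | P x]| = \sum_x (P x : nat).
Proof. by rewrite -sum1dep_card big_mkcond. Qed.

Lemma double_count F U :
  \sum_(c < N.+1) #|colS F U c| = \sum_(v in U) cnt F v.
Proof.
rewrite /colS /cnt.
transitivity (\sum_(c < N.+1) \sum_(r : 'I_n) (nbbox alpha r c && (F (r, c) \in U) : nat)).
  by apply: eq_bigr => c _; rewrite card_sumb.
transitivity (\sum_(v in U) \sum_(u : 'I_n * 'I_N.+1) (nbbox alpha u.1 u.2 && (F u == v) : nat)); last first.
  by apply: eq_bigr => v _; rewrite card_sumb.
rewrite [RHS]exchange_big /=.
transitivity (\sum_(u : 'I_n * 'I_N.+1) (nbbox alpha u.1 u.2 && (F u \in U) : nat)).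
  by rewrite exchange_big pair_bigA; apply: eq_bigr => -[r c].
apply: eq_bigr => u _.
case: (boolP (F u \in U)) => FU.
  rewrite (bigD1 (F u)) //= eqxx andbT big1 ?addn0 ?andbT //.
  by move=> v /andP[_ /negbTE]; rewrite eq_sym => ->; rewrite andbF.
rewrite andbF big1 // => v vU; case: eqP => [E|]; last by rewrite andbF.
by rewrite E vU in FU.
Qed.

Lemma naf1 (F : fil) : NAF sigma F -> forall r1 r2 (c : 'I_N.+1),
  r1 != r2 -> c <= al alpha r1 -> c <= al alpha r2 -> F (r1, c) != F (r2, c).
Proof.
case/and3P => _ _ /andP[/forallP H _] r1 r2 c h1 h2 h3.
by move: (H r1) => /forallP /(_ r2) /forallP /(_ c) /implyP; apply; rewrite h1 h2 h3.
Qed.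

Lemma naf2 (F : fil) : NAF sigma F -> forall r1 r2 (c : 'I_N.+1),
  1 <= c -> c.-1 <= al alpha r1 -> c <= al alpha r2 -> r1 < r2 ->
  ent F r1 c.-1 != F (r2, c).
Proof.
case/and3P => _ _ /andP[_ /forallP H] r1 r2 c h1 h2 h3 h4.
by move: (H r1) => /forallP /(_ r2) /forallP /(_ c) /implyP; apply; rewrite h1 h2 h3 h4.
Qed.

Lemma nafB (F : fil) : NAF sigma F -> forall r, F (r, ord0) = sigma r.
Proof. by case/and3P => /forallP H _ _ r; apply/eqP. Qed.

Lemma nafN (F : fil) : NAF sigma F -> forall r (c : 'I_N.+1), al alpha r < c -> F (r, c) = sigma r.
Proof.
case/and3P => _ /forallP H _ r c h.
by move: (H r) => /forallP /(_ c) /implyP /(_ h) /eqP.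
Qed.

Lemma colS_U (F : fil) U c : NAF sigma F -> #|colS F U c| <= #|U|.
Proof.
move=> nF.
rewrite -(@card_in_imset _ _ (fun r => F (r, c))); last first.
  move=> r1 r2; rewrite !inE => /andP[/andP[_ h1] _] /andP[/andP[_ h2] _] E.
  apply/eqP; apply/negPn/negP => ne; move: (naf1 nF ne h1 h2); by rewrite E eqxx.
apply: subset_leq_card; apply/subsetP => v /imsetP[r].
by rewrite inE => /andP[_ h] ->.
Qed.

Lemma colS_h (F : fil) U (c : 'I_N.+1) : #|colS F U c| <= \sum_r (c <= al alpha r : nat).
Proof.
rewrite /colS card_sumb; apply: leq_sum => r _.
have [h|h] := leqP c (al alpha r); first by case: (_ && _).
by rewrite /nbbox (leqNgt c) h andbF.
Qed.


Definition hh (c : nat) := \sum_(r < n) (c <= al alpha r : nat).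

Lemma sum_hh t : \sum_(c < N.+1) ((t < c) : nat) * hh c = \sum_(r < n) (al alpha r - t).
Proof.
rewrite /hh.
transitivity (\sum_(c < N.+1) \sum_(r < n) ((t < c) && (c <= al alpha r) : nat)).
  by apply: eq_bigr => c _; rewrite big_distrr /=; apply: eq_bigr => r _; case: (t < c); rewrite /= ?mul1n ?mul0n.
rewrite exchange_big; apply: eq_bigr => r _; rewrite cntI.
have := al_le_N r; case: (leqP t N) => h1 h2; lia.
Qed.

Lemma sum_low t : \sum_(c < N.+1) ((0 < c) && (c <= t) : nat) = minn t N.
Proof. rewrite cntI; lia. Qed.

Lemma ltn_sum_ord M (f g : 'I_M -> nat) j :
  (forall i, f i <= g i) -> f j < g j -> \sum_i f i < \sum_i g i.
Proof.
move=> H hj; rewrite (bigD1 j) // [X in _ < X](bigD1 j) //= -addSn.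
by apply: leq_add => //; apply: leq_sum => i _.
Qed.

Lemma eq_sum_ord M (f g : 'I_M -> nat) :
  (forall i, f i <= g i) -> \sum_i g i <= \sum_i f i -> forall i, f i = g i.
Proof.
move=> H hs i; apply/eqP; rewrite eqn_leq H /= leqNgt; apply/negP => lt.
by have := ltn_sum_ord H lt; rewrite ltnNge hs.
Qed.

Lemma count_sum (g : n.-tuple nat) t :
  count (fun x => t <= x) g = \sum_(r < n) (t <= tnth g r : nat).
Proof. by rewrite -sum1_count big_tuple big_mkcond. Qed.

Lemma sumsub_tuple (g : n.-tuple nat) t :
  \sum_(x <- g) (x - t) = \sum_(r < n) (tnth g r - t).
Proof. by rewrite big_tuple. Qed.


Definition B t k (c : nat) := ((0 < c) && (c <= t)) * k + (t < c) * hh c.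

Lemma sumB t k : \sum_(c < N.+1) B t k c = minn t N * k + \sum_(r < n) (al alpha r - t).
Proof. by rewrite big_split /= -big_distrl sum_low sum_hh. Qed.

Section F.
Variables (F : fil) (gamma : n.-tuple nat).
Hypothesis nF : NAF sigma F.
Hypothesis hc : has_content sigma gamma F.

Definition U t := [set v | t <= cnt F v].

Lemma cnt_content r : cnt F (sigma r) = tnth gamma r.
Proof. by move/forallP: hc => /(_ r) /eqP. Qed.

Lemma card_U t : #|U t| = count (fun x => t <= x) gamma.
Proof.
rewrite card_sumb count_sum (reindex_inj (@perm_inj _ sigma)) /=.
by apply: eq_bigr => r _; rewrite cnt_content.
Qed.

Lemma lhs t : \sum_(c < N.+1) #|colS F (U t) c| = t * #|U t| + \sum_(r < n) (tnth gamma r - t).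
Proof.
rewrite double_count.
transitivity (\sum_(v in U t) (t + (cnt F v - t))).
  by apply: eq_bigr => v; rewrite inE => h; rewrite subnKC.
rewrite big_split /= sum_nat_const mulnC; congr (_ + _).
rewrite big_mkcond /=; transitivity (\sum_v (cnt F v - t)).
  apply: eq_bigr => v _; rewrite inE; case: leqP => // h.
  by symmetry; apply/eqP; rewrite subn_eq0 ltnW.
rewrite (reindex_inj (@perm_inj _ sigma)) /=.
by apply: eq_bigr => r _; rewrite cnt_content.
Qed.

Lemma colS_B t (c : 'I_N.+1) : #|colS F (U t) c| <= B t #|U t| c.
Proof.
case: (posnP c) => [c0|cpos].
  by rewrite /colS card_sumb big1 // => r _; rewrite /nbbox c0.
rewrite /B cpos /=; case: (leqP c t) => ct.
  by rewrite /= mul1n mul0n addn0 colS_U.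
by rewrite /= mul0n add0n mul1n colS_h.
Qed.


Lemma count0 (g : n.-tuple nat) : count (fun x => 0 <= x) g = n.
Proof. by rewrite (@eq_count _ _ predT) // count_predT size_tuple. Qed.

Lemma noA t : count (fun x => t <= x) alpha < count (fun x => t <= x) gamma ->
  \sum_(r < n) (tnth gamma r - t) = \sum_(r < n) (al alpha r - t) -> False.
Proof.
move=> hlt hsum.
have hle : \sum_(c < N.+1) #|colS F (U t) c| <= \sum_(c < N.+1) B t #|U t| c.
  by apply: leq_sum => c _; apply: colS_B.
rewrite lhs sumB hsum in hle.
have ht : 0 < t by case: (posnP t) hlt => // ->; rewrite !count0 ltnn.
rewrite -card_U count_sum -/(hh t) in hlt.
case: (leqP t N) => tN.
  have Bt : B t #|U t| (inord t : 'I_N.+1) = #|U t|.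
    by rewrite /B inordK // ht leqnn ltnn /= mul1n mul0n addn0.
  have := ltn_sum_ord (fun c => colS_B t c) (j := inord t).
  rewrite Bt lhs sumB hsum.
  have -> : minn t N = t by apply/minn_idPl.
  rewrite ltnn => H; suff K : #|colS F (U t) (inord t)| < #|U t| by move: (H K).
  apply: (leq_ltn_trans _ hlt).
  by have := colS_h F (U t) (inord t); rewrite inordK.
have E : minn t N = N by apply/minn_idPr/ltnW.
rewrite E in hle.
have : N * #|U t| < t * #|U t| by rewrite ltn_pmul2r // (leq_ltn_trans _ hlt).
lia.
Qed.

Lemma contig :
  (forall t, count (fun x => t <= x) gamma = count (fun x => t <= x) alpha) ->
  (forall t, \sum_(r < n) (tnth gamma r - t) = \sum_(r < n) (al alpha r - t)) ->
  forall s (c : 'I_N.+1), 0 < c -> c <= tnth gamma s ->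
  exists r, c <= al alpha r /\ F (r, c) = sigma s.
Proof.
move=> hcnt hsum s c cpos cs.
set t := tnth gamma s.
have sU : sigma s \in U t by rewrite inE cnt_content.
have kpos : 0 < #|U t| by apply/card_gt0P; exists (sigma s).
have tN : t <= N.
  rewrite leqNgt; apply/negP => Nt.
  move: kpos; rewrite card_U hcnt count_sum big1 // => r _.
  by have := al_le_N r; rewrite /al; case: leqP => [h|//] h2; lia.
have heq := eq_sum_ord (fun c => colS_B t c).
rewrite lhs sumB hsum in heq.
have E : minn t N = t by apply/minn_idPl.
rewrite E in heq.
have := heq (leqnn _) c; rewrite /B cpos cs (ltnNge t c) cs /= mul1n mul0n addn0 => hk.
have himg : #|[set F (r, c) | r in colS F (U t) c]| = #|U t|.
  rewrite card_in_imset; first exact: hk.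
  move=> r1 r2; rewrite !inE => /andP[/andP[_ h1] _] /andP[/andP[_ h2] _] E2.
  apply/eqP; apply/negPn/negP => ne; move: (naf1 nF ne h1 h2); by rewrite E2 eqxx.
have sub : [set F (r, c) | r in colS F (U t) c] \subset U t.
  by apply/subsetP => v /imsetP[r]; rewrite inE => /andP[_ h] ->.
move/subset_cardP: sub => /(_ himg) /(_ (sigma s)); rewrite sU.
case/imsetP => r; rewrite inE => /andP[/andP[_ h] _] E3.
by exists r; split.
Qed.


Lemma inord0N : (inord 0 : 'I_N.+1) = ord0.
Proof. by apply: val_inj; rewrite /= inordK. Qed.

Hypothesis hcont : forall s (c : 'I_N.+1), 0 < c -> c <= tnth gamma s ->
  exists r, c <= al alpha r /\ F (r, c) = sigma s.
Hypothesis hgN : forall s, tnth gamma s <= N.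

Lemma row_step (s : 'I_n) :
  (forall j : 'I_n, j < s -> forall c, c <= al alpha j -> ent F j c = sigma j) ->
  forall c, c <= tnth gamma s -> c <= al alpha s /\ ent F s c = sigma s.
Proof.
move=> hj; elim=> [|c IH] hc1.
  by split => //; rewrite /ent inord0N nafB.
have [IH1 IH2] := IH (ltnW hc1).
have cN : c.+1 <= N by apply: leq_trans hc1 (hgN s).
have vC : ((inord c.+1 : 'I_N.+1) : nat) = c.+1 by rewrite inordK.
have := @hcont s (inord c.+1); rewrite vC => /(_ isT hc1) [r [hr Er]].
case: (ltngtP r s) => rs.
- have := hj r rs c.+1 hr; rewrite /ent Er => /val_inj/perm_inj E.
  by rewrite E ltnn in rs.
- have := naf2 nF (c := inord c.+1) (r1 := s) (r2 := r).
  by rewrite vC /= IH1 hr rs Er -IH2 eqxx; move/(_ isT isT isT isT).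
- have E : r = s by apply: val_inj.
  subst r; split => //.
  by rewrite /ent Er.
Qed.

Lemma rows_all i :
  (forall j : 'I_n, j < i -> tnth gamma j = al alpha j) ->
  forall j : 'I_n, j < i -> forall c, c <= al alpha j -> ent F j c = sigma j.
Proof.
elim: i => [//|i IH] hpre j ji c hc1.
have hj : forall j' : 'I_n, j' < j -> forall c, c <= al alpha j' -> ent F j' c = sigma j'.
  move=> j' jj'; apply: IH => [k ki|]; first by apply: hpre; apply: ltnW.
  by apply: leq_trans jj' _.
have [ji'|ji'|ji'] := ltngtP j i.
- by apply: IH => // k ki; apply: hpre; apply: ltnW.
- by rewrite ltnS leqNgt ji' in ji.
- by apply: (proj2 (row_step hj _)); rewrite hpre // ji'.
Qed.

Lemma row_le (s : 'I_n) :
  (forall j : 'I_n, j < s -> tnth gamma j = al alpha j) -> tnth gamma s <= al alpha s.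
Proof.
move=> hpre.
have hj := rows_all hpre.
exact: (proj1 (row_step hj (leqnn _))).
Qed.

End F.

Definition F0 : fil := [ffun u : 'I_n * 'I_N.+1 => sigma u.1].

Lemma entF0 r c : ent F0 r c = sigma r.
Proof. by rewrite /ent ffunE. Qed.

Lemma F0_NAF : NAF sigma F0.
Proof.
apply/and3P; split.
- by apply/forallP => r; rewrite ffunE.
- by apply/forallP => r; apply/forallP => c; rewrite ffunE eqxx implybT.
apply/andP; split.
  apply/forallP => r1; apply/forallP => r2; apply/forallP => c; apply/implyP.
  by case/and3P => ne _ _; rewrite !ffunE /= (inj_eq perm_inj).
apply/forallP => r1; apply/forallP => r2; apply/forallP => c; apply/implyP.
case/and4P => _ _ _ lt; rewrite entF0 ffunE /=.
by rewrite (inj_eq val_inj) (inj_eq perm_inj) neq_ltn lt.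
Qed.

Lemma F0_cont : has_content sigma alpha F0.
Proof.
apply/forallP => r; apply/eqP.
rewrite card_sumb.
transitivity (\sum_(p : 'I_n * 'I_N.+1) (nbbox alpha p.1 p.2 && (sigma p.1 == sigma r) : nat)).
  by apply: eq_bigr => p _; rewrite ffunE.
rewrite -(pair_bigA _ (fun (r0 : 'I_n) (c : 'I_N.+1) => (nbbox alpha r0 c && (sigma r0 == sigma r) : nat))) /=.
rewrite (bigD1 r) //= [X in _ + X]big1 ?addn0; last first.
  move=> r' ne; apply: big1 => c _; rewrite (inj_eq perm_inj).
  by rewrite (negbTE ne) andbF.
transitivity (\sum_(c < N.+1) ((0 < c) && (c <= al alpha r) : nat)).
  by apply: eq_bigr => c _; rewrite eqxx andbT.
rewrite cntI; have := al_le_N r; rewrite /al; lia.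
Qed.

Lemma inv_same a e : a != e -> inv_triple a a e.
Proof.
rewrite /inv_triple; case: (ltngtP a e) => // h _.
  by apply/or3P; apply: Or31; apply/andP; split; lia.
by apply/or3P; apply: Or33; apply/andP; split; lia.
Qed.

Local Open Scope ring_scope.
Lemma weight_F0 : weight F0 = 1.
Proof.
rewrite /weight.
have -> : maj F0 = 0%N.
  rewrite /maj big1 // => r _; rewrite big1 // => c _.
  by rewrite /is_descent !entF0 ltnn.
have -> : coinv F0 = 0%N.
  rewrite /coinv big1 // => r _; rewrite big1 // => r' _; rewrite big1 // => c _.
  rewrite !entF0.
  have ne1 : typeA alpha r r' c -> (sigma r : nat) != sigma r'.
    by case/and3P => _ h _; rewrite (inj_eq val_inj) (inj_eq perm_inj) neq_ltn h.
  have ne2 : typeB alpha r r' c -> (sigma r : nat) != sigma r'.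
    by case/and4P => _ h _ _; rewrite (inj_eq val_inj) (inj_eq perm_inj) neq_ltn h orbT.
  case: (boolP (typeA alpha r r' c)) => hA; first by rewrite inv_same ?ne1 //= add0n; case: (boolP (typeB alpha r r' c)) => hB //; rewrite inv_same ?ne2.
  by case: (boolP (typeB alpha r r' c)) => hB //; rewrite inv_same ?ne2.
rewrite !expr0 !mul1r big1 // => r _; rewrite big1 // => c.
by rewrite !entF0 eqxx.
Qed.
Local Close Scope ring_scope.

Lemma F0_unique (F : fil) : NAF sigma F -> has_content sigma alpha F -> F = F0.
Proof.
move=> nF hcF.
have hcnt : forall t, count (fun x => t <= x) alpha = count (fun x => t <= x) alpha by [].
have hgN : forall s, tnth alpha s <= N by move=> s; exact: al_le_N.
have hcont := contig nF hcF hcnt (fun t => erefl).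
have H := rows_all nF hcont hgN (i := n) (fun j _ => erefl).
apply/ffunP => -[r c]; rewrite ffunE /=.
case: (leqP c (al alpha r)) => hc.
  by have := H r (ltn_ord r) c hc; rewrite /ent inord_val => /val_inj.
exact: nafN.
Qed.

End S.

Lemma geq_path_all (x : nat) s : path geq x s -> all (fun z => z <= x) s.
Proof.
move=> p; have := order_path_min _ p.
by apply => // a b c h1 h2; apply: leq_trans h2 h1.
Qed.

Lemma lex_count (s1 s2 : seq nat) : sorted geq s1 -> sorted geq s2 -> lex_gt s1 s2 ->
  exists t, count (fun x => t <= x) s2 < count (fun x => t <= x) s1 /\
            \sum_(x <- s1) (x - t) = \sum_(x <- s2) (x - t).
Proof.
elim: s1 s2 => [|x s IH] [|y s'] //= so1 so2.
case/orP => [yx|/andP[/eqP exy hl]].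
  have a1 := geq_path_all so1; have a2 := geq_path_all so2.
  exists x; split.
    have c0 : count (fun z => x <= z) s' = 0.
      apply/eqP; rewrite -leqn0 leqNgt -has_count; apply/hasPn => z zs.
      by move/allP: a2 => /(_ z zs) zy; rewrite -ltnNge (leq_ltn_trans zy yx).
    by rewrite c0 leqnn (leqNgt x y) yx.
  rewrite !big_cons subnn add0n.
  have -> : y - x = 0 by apply/eqP; rewrite subn_eq0 ltnW.
  rewrite add0n.
  rewrite big1_seq; last by move=> z /andP[_ zs]; move/allP: a1 => /(_ z zs); rewrite -subn_eq0 => /eqP.
  rewrite big1_seq //; move=> z /andP[_ zs]; move/allP: a2 => /(_ z zs) zy.
  by apply/eqP; rewrite subn_eq0 (leq_trans zy (ltnW yx)).
subst y.
have [t [h1 h2]] := IH s' (path_sorted so1) (path_sorted so2) hl.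
exists t; split; first by rewrite ltn_add2l.
by rewrite !big_cons h2.
Qed.

Lemma lex_nth (s1 s2 : seq nat) : lex_gt s1 s2 ->
  exists i, [/\ i < size s1, (forall j, j < i -> nth 0 s1 j = nth 0 s2 j) & nth 0 s2 i < nth 0 s1 i].
Proof.
elim: s1 s2 => [|x s IH] [|y s'] //=.
case/orP => [yx|/andP[/eqP exy hl]].
  by exists 0; split => // j; rewrite ltn0.
have [i [h1 h2 h3]] := IH s' hl.
exists i.+1; split => //; case => [|j] //= ji; by [rewrite exy | apply: h2].
Qed.

Lemma sortc_perm (s : seq nat) : perm_eq (sortc s) s.
Proof. by rewrite /sortc perm_sort perm_refl. Qed.

Lemma sortc_sorted (s : seq nat) : sorted geq (sortc s).
Proof. by apply: sort_sorted => a b; apply: leq_total. Qed.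

Theorem mainTheorem1 (n m : nat) (alpha gamma : n.-tuple nat) (sigma : {perm 'I_n}) :
  (0 < n)%N ->
  (\sum_(i <- alpha) i)%N = m ->
  (\sum_(i <- gamma) i)%N = m ->
  [/\ (lex_gt (sortc gamma) (sortc alpha) -> coefEsig alpha sigma gamma = 0%R),
      (sortc gamma = sortc alpha -> lex_gt gamma alpha -> coefEsig alpha sigma gamma = 0%R)
    & (gamma = alpha -> coefEsig alpha sigma gamma = 1%R)].
Proof.
move=> _ _ _; split.
- move=> hlex; rewrite /coefEsig big_pred0 // => F.
  apply/negP => /andP[nF hcF].
  have [t [h1 h2]] := lex_count (sortc_sorted _) (sortc_sorted _) hlex.
  rewrite !(seq.permP (sortc_perm _)) in h1.
  rewrite !(perm_big _ (sortc_perm _)) /= !sumsub_tuple in h2.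
  exact: (noA nF hcF h1 h2).
- move=> hs hlex; rewrite /coefEsig big_pred0 // => F.
  apply/negP => /andP[nF hcF].
  have hcnt : forall t, count (fun x => t <= x) gamma = count (fun x => t <= x) alpha.
    move=> t; rewrite -(seq.permP (sortc_perm gamma)) -(seq.permP (sortc_perm alpha)).
    by rewrite hs.
  have hsum : forall t, \sum_(r < n) (tnth gamma r - t) = \sum_(r < n) (al alpha r - t).
    move=> t; rewrite -!sumsub_tuple -(perm_big _ (sortc_perm gamma)) -(perm_big _ (sortc_perm alpha)).
    by rewrite hs.
  have hgN : forall s, tnth gamma s <= Ncol alpha.
    move=> s; rewrite leqNgt; apply/negP => Nt.
    have := hcnt (tnth gamma s); rewrite !count_sum (bigD1 s) //= leqnn [X in _ = X]big1.
      by rewrite add1n.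
    by move=> r _; have := @al_le_N _ alpha r; rewrite /al; case: leqP => [h|//] h2; lia.
  have hcont := contig nF hcF hcnt hsum.
  have [i [hi hpre hlt]] := lex_nth hlex.
  rewrite size_tuple in hi.
  have := row_le nF hcont hgN (s := Ordinal hi).
  rewrite /al !(tnth_nth 0) /= leqNgt hlt => H.
  suff K : forall j : 'I_n, j < i -> tnth gamma j = tnth alpha j by move: (H K).
  by move=> j ji; rewrite !(tnth_nth 0) hpre.
- move=> E; subst gamma; rewrite /coefEsig (big_pred1 (F0 alpha sigma)) ?weight_F0 // => F.
  rewrite /=; case: (boolP (F == F0 alpha sigma)) => [/eqP ->|ne].
    by rewrite F0_NAF F0_cont.
  apply/negP => /andP[nF hcF]; by rewrite (F0_unique nF hcF) eqxx in ne.
Qed.
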